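(* Let $(X,u)$ and $(Y,v)$ be Čech closure spaces, let $Y^X$ be the set of all continuous maps $(X,u)\to(Y,v)$, and let $\mathcal A$ be a collection of compact subsets of $(X,u)$. Then the $\mathcal A$-topology on $Y^X$ is proper.
   Context: A Čech closure space $(X,u)$ is a set $X$ with an operator $u:\mathcal P(X)\to\mathcal P(X)$ satisfying $u(\emptyset)=\emptyset$, $A\subset u(A)$, and $u(A\cup B)=u(A)\cup u(B)$. The interior is $\mathrm{int}_u A=X\setminus u(X\setminus A)$; $U$ is a neighbourhood of $x$ if $x\in\mathrm{int}_uU$. A map $f:(X,u)\to(Y,v)$ is continuous if $f(u(A))\subset v(f(A))$ for all $A$. A family $\{G_\alpha\}$ is an interior cover of $A\subset X$ if $A\subset\bigcup_\alpha\mathrm{int}_uG_\alpha$; $A$ is compact if every interior cover of $A$ has a finite subfamily covering $A$. Let $\mathcal V=\{V\subset Y:\mathrm{int}_vV\ne\emptyset\}$ and for $A\subset X$, $V\subset Y$ let $(A,V)=\{f\in Y^X: f(A)\subset V\}$. The $\mathcal A$-topology is the topology on $Y^X$ generated by the subbase $\{(A,V): A\in\mathcal A,\ V\in\mathcal V,\ V=\mathrm{int}_vV\}$. The product $(Z,w)\times(X,u)$ is $Z\times X$ with the closure operator for which the sets $W\times U$ ($W$ a neighbourhood of $z$, $U$ of $x$) form a neighbourhood base at $(z,x)$; for $g:Z\times X\to Y$, $g^*(z)(x)=g(z,x)$. A topology on $Y^X$ (regarded as its Kuratowski closure operator $\sigma$) is proper if for every closure space $(Z,w)$, continuity of $g:(Z,w)\times(X,u)\to(Y,v)$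 implies continuity of $g^*:(Z,w)\to(Y^X,\sigma)$. *)

(* Defs.v *)
From mathcomp Require Import all_boot.
From mathcomp Require Import boolp classical_sets cardinality.
Set Implicit Arguments. Unset Strict Implicit. Unset Printing Implicit Defensive.
Local Open Scope classical_set_scope.

Definition cech_closure (X : Type) (u : set X -> set X) : Prop :=
  [/\ u set0 = set0, (forall A, A `<=` u A) &
      (forall A B, u (A `|` B) = u A `|` u B)].

Definition cinterior (X : Type) (u : set X -> set X) (A : set X) : set X :=
  ~` u (~` A).

Definition cnbhd (X : Type) (u : set X -> set X) (x : X) (U : set X) : Prop :=
  cinterior u U x.

Definition ccontinuous (X Y : Type) (u : set X -> set X) (v : set Y -> set Y)
  (f : X -> Y) : Prop :=
  forall A, f @` (u A) `<=` v (f @` A).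

Definition interior_cover (X : Type) (u : set X -> set X) (G : set (set X))
  (A : set X) : Prop :=
  A `<=` \bigcup_(U in G) cinterior u U.

Definition ccompact (X : Type) (u : set X -> set X) (A : set X) : Prop :=
  forall G : set (set X), interior_cover u G A ->
    exists F : set (set X), [/\ finite_set F, F `<=` G & A `<=` \bigcup_(U in F) U].

(* Product closure: the W x U (W nbhd of z, U nbhd of x) form a nbhd base. *)
Definition prod_closure (Z X : Type) (w : set Z -> set Z) (u : set X -> set X)
  (S : set (Z * X)) : set (Z * X) :=
  [set p | forall W U, cnbhd w p.1 W -> cnbhd u p.2 U ->
             exists q, [/\ S q, W q.1 & U q.2]].

Definition cfun (X Y : Type) (u : set X -> set X) (v : set Y -> set Y) :=
  {f : X -> Y | ccontinuous u v f}.

Definition Atop_subbase (X Y : Type) (u : set X -> set X) (v : set Y -> set Y)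
  (calA : set (set X)) : set (set (@cfun X Y u v)) :=
  [set S | exists (A : set X) (V : set Y),
     [/\ calA A, cinterior v V !=set0, V = cinterior v V &
         S = [set f : @cfun X Y u v | (proj1_sig f) @` A `<=` V]]].

Definition gen_open (T : Type) (sb : set (set T)) (O : set T) : Prop :=
  forall f, O f -> exists F : set (set T),
    [/\ finite_set F, F `<=` sb, (\bigcap_(S in F) S) f &
        \bigcap_(S in F) S `<=` O].

Definition gen_closure (T : Type) (sb : set (set T)) (B : set T) : set T :=
  [set f | forall O, gen_open sb O -> O f -> O `&` B !=set0].

Definition Atop_closure (X Y : Type) (u : set X -> set X) (v : set Y -> set Y)
  (calA : set (set X)) : set (@cfun X Y u v) -> set (@cfun X Y u v) :=
  gen_closure (@Atop_subbase X Y u v calA).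

Definition proper_topology (X Y : Type) (u : set X -> set X) (v : set Y -> set Y)
  (sigma : set (@cfun X Y u v) -> set (@cfun X Y u v)) : Prop :=
  forall (Z : Type) (w : set Z -> set Z), cech_closure w ->
  forall g : Z * X -> Y, ccontinuous (prod_closure w u) v g ->
    exists gs : Z -> @cfun X Y u v,
      (forall z x, sval (gs z) x = g (z, x)) /\ ccontinuous w sigma gs.

Arguments cfun : clear implicits.
Arguments Atop_subbase : clear implicits.
Arguments Atop_closure : clear implicits.
Arguments proper_topology : clear implicits.

(* Main.v *)
Require Import Defs.
From mathcomp Require Import all_boot.
From mathcomp Require Import boolp classical_sets cardinality.
Local Open Scope classical_set_scope.

Section Aux.
Variables (Z : Type) (w : set Z -> set Z).
Hypothesis hw : cech_closure w.

Lemma cl_mono (A B : set Z) : A `<=` B -> w A `<=` w B.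
Proof.
case: hw => _ _ hU sAB; have -> : B = A `|` B.
  by apply/seteqP; split => x; [right| case=> //; apply: sAB].
by rewrite hU => x wx; left.
Qed.

Lemma nbhd_mem z W : cnbhd w z W -> W z.
Proof.
case: hw => _ hsub _ hn; apply: contrapT => nW; apply: hn; exact: hsub.
Qed.

Lemma nbhdT z : cnbhd w z setT.
Proof.
case: hw => h0 _ _; rewrite /cnbhd /cinterior setCT h0 //.
Qed.

Lemma nbhdI z W1 W2 : cnbhd w z W1 -> cnbhd w z W2 -> cnbhd w z (W1 `&` W2).
Proof.
case: hw => _ _ hU; rewrite /cnbhd /cinterior setCI hU => h1 h2 [] //.
Qed.

Lemma cl_meet z B W : w B z -> cnbhd w z W -> exists b, B b /\ W b.
Proof.
move=> wB hW; apply: contrapT => hn; apply: hW; apply: (@cl_mono B (~` W) _ z wB).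
by move=> b Bb Wb; apply: hn; exists b.
Qed.

Lemma nbhd_finite (T : eqType) (z : Z) (P : T -> set Z -> Prop) (F : set T) :
  finite_set F ->
  (forall S W W', W' `<=` W -> P S W -> P S W') ->
  (forall S, F S -> exists W, cnbhd w z W /\ P S W) ->
  exists W, cnbhd w z W /\ forall S, F S -> P S W.
Proof.
move=> /finite_seqP [s ->] hP; elim: s => [|a s IH] H.
  by exists setT; split; [exact: nbhdT| move=> S /=; rewrite in_nil].
have [W1 [hW1 P1]] := H a (mem_head a s).
have [|W2 [hW2 P2]] := IH.
  by move=> S /= Ss; apply: H => /=; rewrite in_cons Ss orbT.
exists (W1 `&` W2); split; first exact: nbhdI.
move=> S /=; rewrite in_cons => /orP [/eqP ->|Ss].
  by apply: hP P1 => x [].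
by apply: hP (P2 _ Ss) => x [].
Qed.
End Aux.
Arguments cl_mono {Z w} hw {A B}.
Arguments cl_meet {Z w} hw {z B W}.
Arguments nbhd_mem {Z w} hw {z W}.
Arguments nbhd_finite {Z w}.

Theorem theorem10 (X Y : Type) (u : set X -> set X) (v : set Y -> set Y)
  (calA : set (set X)) :
  cech_closure u -> cech_closure v ->
  (forall A, calA A -> ccompact u A) ->
  proper_topology X Y u v (Atop_closure X Y u v calA).
Proof.
move=> hu hv hA Z w hw g hg.
have hcont : forall z, ccontinuous u v (fun x => g (z, x)).
  move=> z A _ [x uAx <-].
  pose S := [set q : Z * X | q.1 = z /\ A q.2].
  have hS : prod_closure w u S (z, x).
    move=> W U /= hW hU.
    have [a [Aa Ua]] := cl_meet hu uAx hU.
    by exists (z, a); split => //; exact: (nbhd_mem hw hW).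
  have := hg S _ (ex_intro2 _ _ (z, x) hS erefl).
  apply: (cl_mono hv).
  move=> _ [[b a] [/= -> Aa] <-]; by exists a.
pose gs z : cfun X Y u v := exist _ (fun x => g (z, x)) (hcont z).
exists gs; split => //.
move=> B _ [z wBz <-] O hO Oz.
have [F [finF Fsb Fz FO]] := hO _ Oz.
have HF : forall S, F S -> exists W, cnbhd w z W /\ forall b, W b -> S (gs b).
  move=> S FS.
  have [A [V [cA _ eV eS]]] := Fsb S FS.
  have gzS := Fz S FS; rewrite eS /= in gzS.
  pose G := [set U : set X | exists W, cnbhd w z W /\
                forall b a, W b -> U a -> V (g (b, a))].
  have hcov : interior_cover u G A.
    move=> x Ax.
    have Vx : V (g (z, x)) by apply: gzS; exists x.
    rewrite eV in Vx.
    have npc : ~ prod_closure w u (g @^-1` (~` V)) (z, x).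
      move=> pc; apply: Vx.
      have := hg _ _ (ex_intro2 _ _ (z, x) pc erefl).
      apply: (cl_mono hv).
      by move=> _ [q hq <-].
    move/existsNP: npc => [W' /existsNP [U' /not_implyP [hW' /not_implyP [hU' hno]]]].
    exists U' => //; exists W'; split => // b a Wb Ua.
    apply: contrapT => nV; apply: hno; exists (b, a); split => //.
  have [F' [finF' F'G covA]] := hA A cA G hcov.
  have HF' : forall U, F' U -> exists W, cnbhd w z W /\ forall b a, W b -> U a -> V (g (b, a)).
    by move=> U /F'G [W1 [hW1 H1]]; exists W1.
  have [W0 [hW0 HW0]] := @nbhd_finite Z w hw (set X) z
     (fun U W => forall b a, W b -> U a -> V (g (b, a))) F' finF'
     (fun U W W' sW h b a Wb Ua => h b a (sW b Wb) Ua) HF'.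
  exists W0; split => // b Wb; rewrite eS /=.
  move=> _ [a Aa <-].
  have [U F'U Ua] := covA a Aa.
  exact: HW0 U F'U b a Wb Ua.
have [W [hW HW]] := @nbhd_finite Z w hw (set (cfun X Y u v)) z
   (fun S W => forall b, W b -> S (gs b)) F finF
   (fun S W W' sW h b Wb => h b (sW b Wb)) HF.
have [b [Bb Wb]] := cl_meet hw wBz hW.
exists (gs b); split; last by exists b.
apply: FO => S FS; exact: HW S FS b Wb.
Qed.
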